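(* Let $A$ be a commutative unital ring, $B$ an $A$-algebra that is finitely generated and free as an $A$-module, and $D$ a $B$-algebra. Let $\mathrm{Der}_B(D)$ be the set of all derivations $\partial$ of $D$ for which there exist a derivation $d$ of $A$ and a derivation $\delta$ of $B$ such that the structure maps are differential maps $(A,d)\to(B,\delta)$ and $(B,\delta)\to(D,\partial)$. For $\partial\in\mathrm{Der}_B(D)$ let $\partial^W$ denote the derivation of the classical Weil descent $W(D)$ given by: the unique derivation of $W(D)$ such that $(W(D),\partial^W)$ is a differential $(A,d)$-algebra and the unit $W_D:D\to W(D)\otimes_A B$ satisfies $W_D\circ\partial=(\partial^W\otimes\delta)\circ W_D$ (for any such $d,\delta$). Then $\mathrm{Der}_B(D)$ is an $A$-submodule and a Lie subring of $\mathrm{Der}(D)$ and the map $\mathrm{Der}_B(D)\to\mathrm{Der}(W(D))$, $\partial\mapsto\partial^W$, is an $A$-module and Lie ring homomorphism. Explicitly, for $\partial_1,\partial_2\in\mathrm{Der}_B(D)$: (i) $(a_1\partial_1+a_2\partial_2)^W=a_1\partial_1^W+a_2\partial_2^W$ for all $a_1,a_2\in A$; (ii) $[\partial_1,\partial_2]^W=[\partial_1^W,\partial_2^W]$; in particular $\partial_1^W,\partial_2^W$ commute if $\partial_1,\partial_2$ commute.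
   Context: All rings and algebras are commutative and unital. Classical Weil descent: for $B$ free of finite rank over $A$ and a $B$-algebra $D$, $W(D)$ is an $A$-algebra with a $B$-algebra homomorphism $W_D:D\to W(D)\otimes_A B$ such that for every $A$-algebra $C$ and every $B$-algebra homomorphism $f:D\to C\otimes_A B$ there is a unique $A$-algebra homomorphism $g:W(D)\to C$ with $(g\otimes\mathrm{id}_B)\circ W_D=f$. For a differential $(A,d)$-algebra $(C,\eta)$, $\eta\otimes\delta$ is the unique derivation of $C\otimes_A B$ making $C\to C\otimes_AB$ and $B\to C\otimes_AB$ differential. $[\partial_1,\partial_2]=\partial_1\partial_2-\partial_2\partial_1$. Elements of $A$ act on derivations of $D$ and of $W(D)$ via the structure maps. *)

(* Defs.v *)
From HB Require Import structures.
From mathcomp Require Import all_boot all_order all_algebra.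
Set Implicit Arguments. Unset Strict Implicit. Unset Printing Implicit Defensive.
Import GRing.Theory.
Local Open Scope ring_scope.

Definition is_der (R : pzRingType) (f : R -> R) : Prop :=
  (forall x y, f (x + y) = f x + f y) /\ (forall x y, f (x * y) = f x * y + x * f y).

Definition fin_free (A : comNzRingType) (B : comAlgType A) : Prop :=
  exists (n : nat) (e : 'I_n -> B), forall x : B,
    exists c : 'I_n -> A, x = \sum_(i < n) c i *: e i /\
      forall c' : 'I_n -> A, x = \sum_(i < n) c' i *: e i -> c' =1 c.

(* (T, iC, iB) is the tensor product C (x)_A B of the A-algebra (C, gC) and the
   A-algebra B, characterised as the pushout (coproduct) of commutative A-algebras. *)
Definition is_tensor (A : comNzRingType) (B : comAlgType A)
  (C : comPzRingType) (gC : {rmorphism A -> C})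
  (T : comPzRingType) (iC : {rmorphism C -> T}) (iB : {rmorphism B -> T}) : Prop :=
  (forall a, iC (gC a) = iB (a%:A)) /\
  forall (S : comPzRingType) (f : {rmorphism C -> S}) (g : {rmorphism B -> S}),
    (forall a, f (gC a) = g (a%:A)) ->
    (exists h : {rmorphism T -> S},
        (forall c, h (iC c) = f c) /\ (forall b, h (iB b) = g b)) /\
    (forall h1 h2 : {rmorphism T -> S},
        (forall c, h1 (iC c) = f c) -> (forall b, h1 (iB b) = g b) ->
        (forall c, h2 (iC c) = f c) -> (forall b, h2 (iB b) = g b) -> h1 =1 h2).

(* Classical Weil descent: (W, alpha) is an A-algebra, (T, iW, iB) = W (x)_A B,
   WD : D -> W (x)_A B is a B-algebra map (D a B-algebra via phi), universal. *)
Definition is_weil_descent (A : comNzRingType) (B : comAlgType A)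
  (D : comPzRingType) (phi : {rmorphism B -> D})
  (W : comPzRingType) (alpha : {rmorphism A -> W})
  (T : comPzRingType) (iW : {rmorphism W -> T}) (iB : {rmorphism B -> T})
  (WD : {rmorphism D -> T}) : Prop :=
  is_tensor alpha iW iB /\ (forall b, WD (phi b) = iB b) /\
  forall (C : comPzRingType) (gC : {rmorphism A -> C})
         (TC : comPzRingType) (jC : {rmorphism C -> TC}) (jB : {rmorphism B -> TC}),
    is_tensor gC jC jB ->
    forall f : {rmorphism D -> TC}, (forall b, f (phi b) = jB b) ->
      (* g (x) id_B is the unique ring map h : T -> TC with h o iW = jC o g, h o iB = jB *)
      (exists g : {rmorphism W -> C}, (forall a, g (alpha a) = gC a) /\
         forall h : {rmorphism T -> TC},
           (forall w, h (iW w) = jC (g w)) -> (forall b, h (iB b) = jB b) ->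
           forall x, h (WD x) = f x) /\
      (forall g1 g2 : {rmorphism W -> C},
         (forall a, g1 (alpha a) = gC a) -> (forall a, g2 (alpha a) = gC a) ->
         (forall h : {rmorphism T -> TC},
           (forall w, h (iW w) = jC (g1 w)) -> (forall b, h (iB b) = jB b) ->
           forall x, h (WD x) = f x) ->
         (forall h : {rmorphism T -> TC},
           (forall w, h (iW w) = jC (g2 w)) -> (forall b, h (iB b) = jB b) ->
           forall x, h (WD x) = f x) ->
         g1 =1 g2).

Definition der_tower (A : comNzRingType) (B : comAlgType A)
  (D : comPzRingType) (phi : {rmorphism B -> D})
  (d : A -> A) (delta : B -> B) (dd : D -> D) : Prop :=
  [/\ is_der d, is_der delta, is_der dd,
      (forall a : A, delta (a%:A) = (d a)%:A) &
      (forall b, dd (phi b) = phi (delta b))].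

Definition in_DerB (A : comNzRingType) (B : comAlgType A)
  (D : comPzRingType) (phi : {rmorphism B -> D}) (dd : D -> D) : Prop :=
  is_der dd /\ exists (d : A -> A) (delta : B -> B), der_tower phi d delta dd.

(* eps = eta (x) delta : the derivation of T = C (x)_A B making C -> T and B -> T differential *)
Definition is_tensor_der (B : pzRingType) (C T : comPzRingType)
  (iC : C -> T) (iB : B -> T) (eta : C -> C) (delta : B -> B) (eps : T -> T) : Prop :=
  [/\ is_der eps, (forall c, eps (iC c) = iC (eta c)) &
      (forall b, eps (iB b) = iB (delta b))].

Definition weil_lift (A : comNzRingType) (B : comAlgType A)
  (D : comPzRingType) (phi : {rmorphism B -> D})
  (W : comPzRingType) (alpha : {rmorphism A -> W})
  (T : comPzRingType) (iW : {rmorphism W -> T}) (iB : {rmorphism B -> T})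
  (WD : {rmorphism D -> T}) (dd : D -> D) (ddW : W -> W) : Prop :=
  is_der ddW /\
  exists (d : A -> A) (delta : B -> B),
    [/\ der_tower phi d delta dd,
        (forall a, ddW (alpha a) = alpha (d a)) &
        exists eps : T -> T, is_tensor_der iW iB ddW delta eps /\
          (forall x, WD (dd x) = eps (WD x))].

(* A acts on derivations of a ring R through the structure map s : A -> R. *)
Definition lcomb (A R : pzRingType) (s : A -> R) (a1 a2 : A) (f1 f2 : R -> R) : R -> R :=
  fun x => s a1 * f1 x + s a2 * f2 x.

Definition lie (R : pzRingType) (f g : R -> R) : R -> R := fun x => f (g x) - g (f x).

(* Main.v *)
Require Import Defs.
From HB Require Import structures.
From mathcomp Require Import all_boot all_order all_algebra ring.
Set Implicit Arguments. Unset Strict Implicit. Unset Printing Implicit Defensive.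
Import GRing.Theory.
Local Open Scope ring_scope.
From Stdlib Require Import ClassicalEpsilon.
Definition dual (R : comPzRingType) : Type := (R * R)%type.
HB.instance Definition _ (R : comPzRingType) := GRing.Zmodule.on (dual R).
Section Dual.
Variable R : comPzRingType.
Definition dmul (x y : dual R) : dual R := (x.1 * y.1, x.1 * y.2 + x.2 * y.1).
Definition done : dual R := (1, 0).
Lemma dmulA : associative dmul.
Proof. by move=> [a b] [c d] [e f]; rewrite /dmul /=; congr pair; ring. Qed.
Lemma dmulC : commutative dmul.
Proof. by move=> [a b] [c d]; rewrite /dmul /=; congr pair; ring. Qed.
Lemma dmul1 : left_id done dmul.
Proof. by move=> [a b]; rewrite /dmul /=; congr pair; ring. Qed.
Lemma pairD (x y : R * R) : x + y = (x.1 + y.1, x.2 + y.2). Proof. by []. Qed.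
Lemma dmulD : left_distributive dmul +%R.
Proof. move=> [a b] [c d] [e f]; rewrite /dmul /= !pairD /=; congr pair; ring. Qed.
HB.instance Definition _ := GRing.Zmodule_isComPzRing.Build (dual R) dmulA dmulC dmul1 dmulD.
Lemma dualM (x y : dual R) : x * y = (x.1 * y.1, x.1 * y.2 + x.2 * y.1). Proof. by []. Qed.
Lemma dual1 : (1 : dual R) = (1, 0). Proof. by []. Qed.
Lemma dualD (x y : dual R) : x + y = (x.1 + y.1, x.2 + y.2). Proof. by []. Qed.
Lemma dualN (x : dual R) : - x = (- x.1, - x.2). Proof. by []. Qed.
Lemma dual0 : (0 : dual R) = (0, 0). Proof. by []. Qed.
End Dual.

Lemma dualE (R : comPzRingType) (x : dual R) : x = (x.1, x.2). Proof. by case: x. Qed.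
Lemma dualB (R : comPzRingType) (x y : dual R) : x - y = (x.1 - y.1, x.2 - y.2). Proof. by []. Qed.

Lemma der1 (R : pzRingType) (r : R -> R) : is_der r -> r 1 = 0.
Proof.
move=> [_ hM]; have := hM 1 1; rewrite !mul1r mulr1 => h.
by apply: (@addrI _ (r 1)); rewrite addr0 -h.
Qed.
Lemma der0 (R : pzRingType) (r : R -> R) : is_der r -> r 0 = 0.
Proof.
move=> [hD _]; have := hD 0 0; rewrite addr0 => h.
by apply: (@addrI _ (r 0)); rewrite addr0 -h.
Qed.
Lemma derN (R : pzRingType) (r : R -> R) : is_der r -> forall x, r (- x) = - r x.
Proof.
move=> hr x; have := proj1 hr x (- x); rewrite subrr der0 // => h.
by apply/eqP; rewrite -addr_eq0 addrC -h.
Qed.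
Lemma derB (R : pzRingType) (r : R -> R) : is_der r -> forall x y, r (x - y) = r x - r y.
Proof. by move=> hr x y; rewrite (proj1 hr) derN. Qed.

Definition dinj (R : comPzRingType) (x : R) : dual R := (x, 0).
Lemma dinj_zmod R : zmod_morphism (@dinj R).
Proof. by move=> x y; rewrite /dinj dualB /= subr0. Qed.
Lemma dinj_monoid R : monoid_morphism (@dinj R).
Proof. by split => // x y; rewrite /dinj dualM /= mulr0 mul0r addr0. Qed.
HB.instance Definition _ (R : comPzRingType) := GRing.isZmodMorphism.Build R (dual R) (@dinj R) (@dinj_zmod R).
HB.instance Definition _ (R : comPzRingType) := GRing.isMonoidMorphism.Build R (dual R) (@dinj R) (@dinj_monoid R).

Definition dmap (R S : comPzRingType) (f : {rmorphism R -> S}) (x : dual R) : dual S :=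
  (f x.1, f x.2).
Lemma dmap_zmod R S f : zmod_morphism (@dmap R S f).
Proof. by move=> x y; rewrite /dmap !dualB /= !rmorphB. Qed.
Lemma dmap_monoid R S f : monoid_morphism (@dmap R S f).
Proof.
by split => [|x y]; rewrite /dmap ?dual1 ?dualM /= ?rmorph1 ?rmorph0 // rmorphD !rmorphM.
Qed.
HB.instance Definition _ (R S : comPzRingType) (f : {rmorphism R -> S}) := GRing.isZmodMorphism.Build (dual R) (dual S) (@dmap R S f) (@dmap_zmod R S f).
HB.instance Definition _ (R S : comPzRingType) (f : {rmorphism R -> S}) := GRing.isMonoidMorphism.Build (dual R) (dual S) (@dmap R S f) (@dmap_monoid R S f).

Record derv (R : comPzRingType) := Derv { dfun :> R -> R; dfunP : is_der dfun }.
Definition dlift (R : comPzRingType) (r : derv R) (x : R) : dual R := (x, r x).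
Lemma dlift_zmod R r : zmod_morphism (@dlift R r).
Proof. by move=> x y; rewrite /dlift dualB /= (derB (dfunP r)). Qed.
Lemma dlift_monoid R r : monoid_morphism (@dlift R r).
Proof.
split => [|x y]; rewrite /dlift ?dual1 ?dualM /= ?(der1 (dfunP r)) //.
by rewrite (proj2 (dfunP r)) addrC mulrC.
Qed.
HB.instance Definition _ (R : comPzRingType) (r : derv R) := GRing.isZmodMorphism.Build R (dual R) (@dlift R r) (@dlift_zmod R r).
HB.instance Definition _ (R : comPzRingType) (r : derv R) := GRing.isMonoidMorphism.Build R (dual R) (@dlift R r) (@dlift_monoid R r).

Record nilp (S : comPzRingType) := Nilp { nval :> S; nvalP : nval * nval = 0 }.
Definition dext (T S : comPzRingType) (h0 : {rmorphism T -> S}) (z : nilp S) (t : dual T) : S :=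
  h0 t.1 + nval z * h0 t.2.
Lemma dext_zmod T S h0 z : zmod_morphism (@dext T S h0 z).
Proof. by move=> x y; rewrite /dext dualB /= !rmorphB mulrBr addrACA opprD. Qed.
Lemma dext_monoid T S h0 z : monoid_morphism (@dext T S h0 z).
Proof.
split => [|x y]; rewrite /dext ?dual1 ?dualM /= ?rmorph1 ?rmorph0 ?mulr0 ?addr0 //.
rewrite rmorphD !rmorphM.
have hz := nvalP z.
transitivity (h0 x.1 * h0 y.1 + (nval z) * (h0 x.1 * h0 y.2 + h0 x.2 * h0 y.1) + (nval z * nval z) * (h0 x.2 * h0 y.2)).
  by rewrite hz mul0r addr0.
ring.
Qed.
HB.instance Definition _ (T S : comPzRingType) (h0 : {rmorphism T -> S}) (z : nilp S) := GRing.isZmodMorphism.Build (dual T) S (@dext T S h0 z) (@dext_zmod T S h0 z).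
HB.instance Definition _ (T S : comPzRingType) (h0 : {rmorphism T -> S}) (z : nilp S) := GRing.isMonoidMorphism.Build (dual T) S (@dext T S h0 z) (@dext_monoid T S h0 z).

Lemma dual_decomp (R : comPzRingType) (x : dual R) : x = dinj x.1 + ((0, 1) : dual R) * dinj x.2.
Proof. by case: x => a b; rewrite /dinj dualM dualD /=; congr pair; ring. Qed.

Lemma dual_tensor (A : comNzRingType) (B : comAlgType A) (W T : comPzRingType)
  (alpha : {rmorphism A -> W}) (iW : {rmorphism W -> T}) (iB : {rmorphism B -> T}) :
  is_tensor alpha iW iB ->
  is_tensor (@dinj W \o alpha : {rmorphism A -> dual W}) (dmap iW) (@dinj T \o iB : {rmorphism B -> dual T}).
Proof.
move=> [hc hU]; split.
  by move=> a; rewrite /= /dmap /dinj /= rmorph0 hc.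
move=> S f g hfg.
have hfg' : forall a, (f \o @dinj W) (alpha a) = g (a%:A) by move=> a; rewrite -hfg.
have [[h0 [h0W h0B]] h0U] := hU S (f \o @dinj W) g hfg'.
have zP : f ((0, 1) : dual W) * f ((0, 1) : dual W) = 0.
  by rewrite -rmorphM dualM /= !mul0r mulr0 addr0 -dual0 rmorph0.
pose z := Nilp zP.
have key : forall h : {rmorphism dual T -> S}, (forall c, h (dmap iW c) = f c) ->
    (forall b, h ((@dinj T \o iB) b) = g b) -> forall t, h t = dext h0 z t.
  move=> h hC hB t.
  have e1 : (h \o @dinj T) =1 h0.
    apply: (proj2 (hU S (f \o @dinj W) g hfg')) => //= c.
    by rewrite -hC /dmap /dinj /= rmorph0.
  rewrite {1}(dual_decomp t) rmorphD rmorphM -!/((h \o @dinj T) _) !e1 /dext /=.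
  congr (_ + _ * _); rewrite -hC /dmap /= rmorph0 rmorph1 //.
split.
  exists (dext h0 z); split.
    move=> c; change (h0 (iW c.1) + nval z * h0 (iW c.2) = f c); rewrite !h0W /=.
    by rewrite {3}(dual_decomp c) rmorphD rmorphM.
  by move=> b; change (h0 (iB b) + nval z * h0 0 = g b); rewrite h0B rmorph0 mulr0 addr0.
move=> h1 h2 h1C h1B h2C h2B t.
by rewrite (key h1) // (key h2).
Qed.
Section Model.
Variables (A : comNzRingType) (B : comAlgType A) (n : nat) (e : 'I_n -> B)
  (pi : B -> 'I_n -> A).
Hypothesis Hrep : forall x, x = \sum_i pi x i *: e i.
Hypothesis Huniq : forall x c, x = \sum_i c i *: e i -> c =1 pi x.

Lemma pi0 k : pi 0 k = 0.
Proof. by rewrite -(Huniq (c := fun _ => 0)) // big1 // => i _; rewrite scale0r. Qed.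
Lemma piD x y k : pi (x + y) k = pi x k + pi y k.
Proof.
rewrite -(Huniq (c := fun i => pi x i + pi y i)) //.
by rewrite {1}(Hrep x) {1}(Hrep y) -big_split /=; apply: eq_bigr => i _; rewrite scalerDl.
Qed.
Lemma piZ a x k : pi (a *: x) k = a * pi x k.
Proof.
rewrite -(Huniq (c := fun i => a * pi x i)) //.
by rewrite {1}(Hrep x) scaler_sumr; apply: eq_bigr => i _; rewrite scalerA.
Qed.
Lemma pi_sum (I : finType) (F : I -> B) k : pi (\sum_i F i) k = \sum_i pi (F i) k.
Proof. by apply: (big_morph (fun x => pi x k)) => [x y|]; rewrite ?piD ?pi0. Qed.
Lemma piE j k : pi (e j) k = (k == j)%:R.
Proof.
rewrite -(Huniq (c := fun i => (i == j)%:R)) //.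
rewrite (bigD1 j) //= eqxx scale1r big1 ?addr0 // => i /negbTE ->; by rewrite scale0r.
Qed.

Definition L (b : B) : 'M[A]_n := \matrix_(k, i) pi (b * e i) k.
Lemma Lcol b c : L b *m (\col_j pi c j) = \col_k pi (b * c) k.
Proof.
apply/matrixP => k z; rewrite !mxE.
rewrite {2}(Hrep c) mulr_sumr pi_sum; apply: eq_bigr => j _.
by rewrite !mxE -scalerAr piZ mulrC.
Qed.
Lemma LM b c : L (b * c) = L b *m L c.
Proof.
apply/matrixP => k i; move: (Lcol b (c * e i)) => /matrixP /(_ k ord0).
rewrite !mxE mulrA => <-; apply: eq_bigr => j _; by rewrite !mxE.
Qed.
Lemma L1 : L 1 = 1%:M.
Proof. by apply/matrixP => k i; rewrite !mxE mul1r piE. Qed.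
Lemma LD b c : L (b + c) = L b + L c.
Proof. by apply/matrixP => k i; rewrite !mxE mulrDl piD. Qed.
Lemma LZ a b : L (a *: b) = a *: L b.
Proof. by apply/matrixP => k i; rewrite !mxE -scalerAl piZ. Qed.

Variables (W : comPzRingType) (alpha : {rmorphism A -> W}).
Definition M (b : B) : 'M[W]_n := map_mx alpha (L b).
Lemma MM b c : M (b * c) = M b *m M c.
Proof. by rewrite /M LM map_mxM. Qed.
Lemma M1 : M 1 = 1%:M.
Proof. by rewrite /M L1; apply/matrixP => i j; rewrite !mxE rmorphMn rmorph1. Qed.
Lemma MD b c : M (b + c) = M b + M c.
Proof. by rewrite /M LD map_mxD. Qed.
Lemma MZ a b : M (a *: b) = alpha a *: M b.
Proof. by apply/matrixP => i j; rewrite /M LZ !mxE rmorphM. Qed.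
Lemma M0 : M 0 = 0.
Proof. by apply/matrixP => i j; rewrite /M !mxE mul0r pi0 rmorph0. Qed.
Lemma M_sum (F : 'I_n -> B) : M (\sum_i F i) = \sum_i M (F i).
Proof. by apply: (big_morph M MD M0). Qed.
Lemma Mspan b : M b = \sum_i alpha (pi b i) *: M (e i).
Proof. by rewrite {1}(Hrep b) M_sum; apply: eq_bigr => i _; rewrite MZ. Qed.

Definition v : 'cV[W]_n := map_mx alpha (\col_j pi 1 j).
Lemma Mv b : M b *m v = map_mx alpha (\col_k pi b k).
Proof. by rewrite /M /v -map_mxM Lcol mulr1. Qed.

Definition spanE (X : 'M[W]_n) := exists u : 'I_n -> W, X = \sum_i u i *: M (e i).
Definition inS (X : 'M[W]_n) : bool := X == \sum_i (X *m v) i ord0 *: M (e i).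

Lemma spanv (u : 'I_n -> W) k : ((\sum_i u i *: M (e i)) *m v) k ord0 = u k.
Proof.
rewrite mulmx_suml summxE (bigD1 k) //= big1 ?addr0.
  by rewrite -scalemxAl Mv !mxE piE eqxx rmorph1 mulr1.
by move=> i /negbTE ik; rewrite -scalemxAl Mv !mxE piE eq_sym ik rmorph0 mulr0.
Qed.
Lemma inSP X : reflect (spanE X) (inS X).
Proof.
apply: (iffP eqP) => [->|[u ->]]; first by eexists.
by apply: eq_bigr => i _; rewrite spanv.
Qed.

Lemma span0 : spanE 0.
Proof. by exists (fun _ => 0); rewrite big1 // => i _; rewrite scale0r. Qed.
Lemma spanB X Y : spanE X -> spanE Y -> spanE (X - Y).
Proof.
move=> [u ->] [w ->]; exists (fun i => u i - w i).
by rewrite -sumrB; apply: eq_bigr => i _; rewrite scalerBl.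
Qed.
Lemma spanD X Y : spanE X -> spanE Y -> spanE (X + Y).
Proof.
move=> [u ->] [w ->]; exists (fun i => u i + w i).
by rewrite -big_split; apply: eq_bigr => i _; rewrite scalerDl.
Qed.
Lemma spanZ c X : spanE X -> spanE (c *: X).
Proof.
move=> [u ->]; exists (fun i => c * u i).
by rewrite scaler_sumr; apply: eq_bigr => i _; rewrite scalerA.
Qed.
Lemma span_sum (F : 'I_n -> 'M[W]_n) : (forall i, spanE (F i)) -> spanE (\sum_i F i).
Proof. by move=> H; apply: big_ind => //; [exact: span0 | exact: spanD]. Qed.
Lemma spanM_b b : spanE (M b).
Proof. by rewrite Mspan; eexists. Qed.
Lemma spanMe X j : spanE X -> spanE (X *m M (e j)).
Proof.
move=> [u ->]; rewrite mulmx_suml; apply: span_sum => i.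
by rewrite -scalemxAl -MM; apply: spanZ; apply: spanM_b.
Qed.
Lemma spanM X Y : spanE X -> spanE Y -> spanE (X *m Y).
Proof.
move=> hX [w ->]; rewrite mulmx_sumr; apply: span_sum => j.
by rewrite -scalemxAr; apply: spanZ; apply: spanMe.
Qed.
Lemma span1 : spanE 1%:M.
Proof. by rewrite -M1; apply: spanM_b. Qed.
Lemma spanC X Y : spanE X -> spanE Y -> X *m Y = Y *m X.
Proof.
have He : forall i Y, spanE Y -> M (e i) *m Y = Y *m M (e i).
  move=> i _ [w ->]; rewrite mulmx_sumr mulmx_suml; apply: eq_bigr => j _.
  by rewrite -scalemxAr -scalemxAl -!MM mulrC.
move=> [u ->] hY; rewrite mulmx_suml mulmx_sumr; apply: eq_bigr => i _.
by rewrite -scalemxAr -scalemxAl He.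
Qed.

Lemma inS_subring : subring_closed inS.
Proof.
split; first by apply/inSP; apply: span1.
  by move=> X Y /inSP hX /inSP hY; apply/inSP; apply: spanB.
by move=> X Y /inSP hX /inSP hY; apply/inSP; apply: spanM.
Qed.

Record Sty := MkS { sval : 'M[W]_n; _ : inS sval }.
HB.instance Definition _ := [isSub for sval].
HB.instance Definition _ := [Choice of Sty by <:].
HB.instance Definition _ := GRing.isSubringClosed.Build _ inS inS_subring.
HB.instance Definition _ := GRing.SubChoice_isSubPzRing.Build _ _ Sty inS_subring.
Lemma Sty_mulC : commutative (@GRing.mul Sty).
Proof.
move=> [X hX] [Y hY]; apply: val_inj => /=.
by apply: spanC; apply/inSP.
Qed.
HB.instance Definition _ := GRing.PzRing_hasCommutativeMul.Build Sty Sty_mulC.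

Lemma inS_scalar w : inS (w%:M).
Proof. by apply/inSP; rewrite -scalemx1; apply: spanZ; exact: span1. Qed.
Lemma inS_M b : inS (M b).
Proof. by apply/inSP; exact: spanM_b. Qed.
Definition fS (w : W) : Sty := MkS (inS_scalar w).
Definition gS (b : B) : Sty := MkS (inS_M b).
Lemma fS_zmod : zmod_morphism fS.
Proof. by move=> x y; apply: val_inj; rewrite /= raddfB. Qed.
Lemma fS_monoid : monoid_morphism fS.
Proof. by split; [apply: val_inj | move=> x y; apply: val_inj; rewrite /= scalar_mxM]. Qed.
HB.instance Definition _ := GRing.isZmodMorphism.Build W Sty fS fS_zmod.
HB.instance Definition _ := GRing.isMonoidMorphism.Build W Sty fS fS_monoid.
Lemma gS_zmod : zmod_morphism gS.
Proof. move=> x y; apply: val_inj => /=; apply/eqP; rewrite eq_sym subr_eq -MD subrK. done. Qed.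
Lemma gS_monoid : monoid_morphism gS.
Proof. by split; [apply: val_inj; rewrite /= M1 | move=> x y; apply: val_inj; rewrite /= MM]. Qed.


HB.instance Definition _ := GRing.isZmodMorphism.Build B Sty gS gS_zmod.
HB.instance Definition _ := GRing.isMonoidMorphism.Build B Sty gS gS_monoid.
Lemma fg_compat a : fS (alpha a) = gS (a%:A).
Proof. by apply: val_inj; rewrite /= MZ M1 scalemx1. Qed.

Lemma iW_inj (T : comPzRingType) (iW : {rmorphism W -> T}) (iB : {rmorphism B -> T}) :
  (0 < n)%N -> is_tensor alpha iW iB -> forall w, iW w = 0 -> w = 0.
Proof.
move=> n0 [_ H] w hw.
have [[h [hW _]] _] := H Sty fS gS fg_compat.
have : val (fS w) = 0 by rewrite -hW hw rmorph0.
move/matrixP/(_ (Ordinal n0) (Ordinal n0)); by rewrite !mxE eqxx mulr1n.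
Qed.
End Model.

Lemma fin_free_inj (A : comNzRingType) (B : comAlgType A) (W T : comPzRingType)
  (alpha : {rmorphism A -> W}) (iW : {rmorphism W -> T}) (iB : {rmorphism B -> T}) :
  fin_free B -> is_tensor alpha iW iB -> forall w, iW w = 0 -> w = 0.
Proof.
move=> [[|n] [e He]] ht.
  have [c [h1 _]] := He 1; move: h1; rewrite big_ord0 => /eqP.
  by rewrite oner_eq0.
pose pi x := proj1_sig (constructive_indefinite_description _ (He x)).
have Hrep : forall x, x = \sum_i pi x i *: e i.
  by move=> x; exact: (proj1 (proj2_sig (constructive_indefinite_description _ (He x)))).
have Huniq : forall x c, x = \sum_i c i *: e i -> c =1 pi x.
  by move=> x c; exact: (proj2 (proj2_sig (constructive_indefinite_description _ (He x))) c).
exact: (iW_inj Hrep Huniq (alpha := alpha) (iB := iB)).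
Qed.

Lemma der_zero (R : comPzRingType) : is_der (fun _ : R => 0).
Proof. by split => x y; rewrite ?addr0 ?mulr0 ?mul0r ?addr0. Qed.

Lemma der_sub (R : comPzRingType) (f g : R -> R) : is_der f -> is_der g ->
  is_der (fun x => f x - g x).
Proof.
move=> [fD fM] [gD gM]; split => x y; rewrite ?fD ?gD ?fM ?gM; ring.
Qed.

Lemma dual_arg (A : comNzRingType) (B : comAlgType A)
  (D : comPzRingType) (phi : {rmorphism B -> D})
  (W : comPzRingType) (alpha : {rmorphism A -> W})
  (T : comPzRingType) (iW : {rmorphism W -> T}) (iB : {rmorphism B -> T})
  (WD : {rmorphism D -> T}) (r : derv W) (rho : derv T) :
  is_weil_descent phi alpha iW iB WD ->
  (forall a, r (alpha a) = 0) -> (forall w, rho (iW w) = iW (r w)) ->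
  (forall b, rho (iB b) = 0) -> (forall x, rho (WD x) = 0) ->
  forall w, r w = 0.
Proof.
move=> [hten [hphi hU]] hra hrW hrB hrD.
have ht2 := dual_tensor hten.
have hf : forall b, (@dinj T \o WD) (phi b) = (@dinj T \o iB) b by move=> b; rewrite /= hphi.
have [_ U] := hU _ _ _ _ _ ht2 (@dinj T \o WD : {rmorphism D -> dual T}) hf.
have gen : forall (r0 : derv W) (rho0 : derv T), (forall a, r0 (alpha a) = 0) ->
    (forall w, rho0 (iW w) = iW (r0 w)) -> (forall b, rho0 (iB b) = 0) ->
    (forall x, rho0 (WD x) = 0) ->
    [/\ forall a, dlift r0 (alpha a) = (@dinj W \o alpha) a &
     forall h : {rmorphism T -> dual T},
      (forall w, h (iW w) = dmap iW (dlift r0 w)) ->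
      (forall b, h (iB b) = (@dinj T \o iB) b) ->
      forall x, h (WD x) = (@dinj T \o WD) x].
  move=> r0 rho0 h1 h2 h3 h4; split.
    by move=> a; rewrite /dlift /dinj /= h1.
  move=> h hW hB x.
  have hc : forall a, (dmap iW \o dlift r0) (alpha a) = (@dinj T \o iB) (a%:A).
    by move=> a; rewrite /= /dlift /dmap /dinj /= h1 rmorph0 (proj1 hten).
  have := proj2 (proj2 hten _ _ _ hc) h (dlift rho0) hW hB _ _ (WD x).
  - move=> ->. rewrite [LHS]/(dlift rho0 (WD x)) h4. by [].
  - move=> w; apply: (@eq_trans _ _ ((iW w, rho0 (iW w)) : dual T)) => //.
    by rewrite h2.
  - move=> b; apply: (@eq_trans _ _ ((iB b, rho0 (iB b)) : dual T)) => //.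
    by rewrite h3.
have z0 := @der_zero W; have z1 := @der_zero T.
have [g1a g1b] := gen r rho hra hrW hrB hrD.
have [g2a g2b] := gen (Derv z0) (Derv z1) (fun _ => erefl) (fun _ => esym (rmorph0 iW))
   (fun _ => erefl) (fun _ => erefl).
move=> w; have := U (dlift r) (dlift (Derv z0)) g1a g2a g1b g2b w.
by rewrite /dlift /= => [[]].
Qed.

Lemma lift_unique (A : comNzRingType) (B : comAlgType A)
  (D : comPzRingType) (phi : {rmorphism B -> D})
  (W : comPzRingType) (alpha : {rmorphism A -> W})
  (T : comPzRingType) (iW : {rmorphism W -> T}) (iB : {rmorphism B -> T})
  (WD : {rmorphism D -> T}) (p : D -> D) (qa qb : W -> W) :
  fin_free B -> is_weil_descent phi alpha iW iB WD ->
  weil_lift phi alpha iW iB WD p qa -> weil_lift phi alpha iW iB WD p qb -> qa =1 qb.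
Proof.
move=> hfree hwd [hqa [da [dela [[_ _ _ hda hpa] hqaa [ea [[hea heaW heaB] hWDa]]]]]].
move=> [hqb [db [delb [[_ _ _ hdb hpb] hqba [eb [[heb hebW hebB] hWDb]]]]]].
have [hten [hphi _]] := hwd.
have inj := fin_free_inj hfree hten.
have heta : forall b, iB (dela b) = iB (delb b).
  by move=> b; rewrite -!hphi -hpa -hpb.
have hal : forall a, alpha (da a) = alpha (db a).
  move=> a; apply/eqP; rewrite -subr_eq0; apply/eqP; apply: inj.
  by rewrite rmorphB !(proj1 hten) -hda -hdb heta subrr.
have dr := der_sub hqa hqb.
have drho := der_sub hea heb.
move=> w; apply/eqP; rewrite -subr_eq0; apply/eqP.
apply: (@dual_arg A B D phi W alpha T iW iB WD (Derv dr) (Derv drho) hwd) => /=.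
- by move=> a; rewrite hqaa hqba hal subrr.
- by move=> v; rewrite heaW hebW rmorphB.
- by move=> b; rewrite heaB hebB heta subrr.
- by move=> x; rewrite -hWDa -hWDb subrr.
Qed.

Lemma der_lcomb (R : comPzRingType) (s1 s2 : R) (f g : R -> R) :
  is_der f -> is_der g -> is_der (fun x => s1 * f x + s2 * g x).
Proof. move=> [fD fM] [gD gM]; split => x y; rewrite ?fD ?gD ?fM ?gM; ring. Qed.

Lemma der_lie (R : comPzRingType) (f g : R -> R) :
  is_der f -> is_der g -> is_der (lie f g).
Proof.
move=> [fD fM] [gD gM]; rewrite /lie; split => x y.
  by rewrite gD fD fD gD; ring.
have e1 : f (g (x * y)) = f (g x) * y + g x * f y + (f x * g y + x * f (g y)).
  by rewrite gM fD !fM.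
have e2 : g (f (x * y)) = g (f x) * y + f x * g y + (g x * f y + x * g (f y)).
  by rewrite fM gD !gM.
rewrite e1 e2; ring.
Qed.

Theorem theorem3p3 (A : comNzRingType) (B : comAlgType A)
  (D : comPzRingType) (phi : {rmorphism B -> D})
  (W : comPzRingType) (alpha : {rmorphism A -> W})
  (T : comPzRingType) (iW : {rmorphism W -> T}) (iB : {rmorphism B -> T})
  (WD : {rmorphism D -> T}) :
  fin_free B ->
  is_weil_descent phi alpha iW iB WD ->
  forall (p1 p2 : D -> D) (q1 q2 : W -> W),
    in_DerB phi p1 -> in_DerB phi p2 ->
    weil_lift phi alpha iW iB WD p1 q1 ->
    weil_lift phi alpha iW iB WD p2 q2 ->
    (forall a1 a2 : A,
       let p := lcomb (fun a => phi (a%:A)) a1 a2 p1 p2 in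
       let q := lcomb alpha a1 a2 q1 q2 in
       [/\ in_DerB phi p, weil_lift phi alpha iW iB WD p q &
           forall q' : W -> W, weil_lift phi alpha iW iB WD p q' -> q' =1 q]) /\
    [/\ in_DerB phi (lie p1 p2),
        weil_lift phi alpha iW iB WD (lie p1 p2) (lie q1 q2) &
        forall q' : W -> W, weil_lift phi alpha iW iB WD (lie p1 p2) q' -> q' =1 lie q1 q2] /\
    ((forall x, p1 (p2 x) = p2 (p1 x)) -> forall w, q1 (q2 w) = q2 (q1 w)).
Proof.
move=> hfree hwd p1 p2 q1 q2 _ _ hl1 hl2.
have hl1' := hl1; have hl2' := hl2.
move: hl1' hl2' => [hq1 [d1 [de1 [[hd1 hde1 hp1 hc1 hpp1] hqa1 [e1 [[he1 heW1 heB1] hWD1]]]]]].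
move=> [hq2 [d2 [de2 [[hd2 hde2 hp2 hc2 hpp2] hqa2 [e2 [[he2 heW2 heB2] hWD2]]]]]].
have [hten [hphi _]] := hwd.
have htc := proj1 hten.
split.
  move=> a1 a2 p q.
  pose d := fun a => a1 * d1 a + a2 * d2 a.
  pose de := fun b => a1%:A * de1 b + a2%:A * de2 b.
  have hp : is_der p by apply: der_lcomb.
  have tow : der_tower phi d de p.
    split; rewrite /d /de /p /lcomb.
    - exact: der_lcomb.
    - exact: der_lcomb.
    - exact: der_lcomb.
    - by move=> a; rewrite hc1 hc2 !mulr_algl !scalerA -scalerDl.
    - by move=> b; rewrite hpp1 hpp2 rmorphD !rmorphM.
  have hl : weil_lift phi alpha iW iB WD p q.
    split; first by apply: der_lcomb.
    exists d, de; split => //.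
      by move=> a; rewrite /q /lcomb hqa1 hqa2 /d rmorphD !rmorphM.
    exists (fun t => iW (alpha a1) * e1 t + iW (alpha a2) * e2 t); split.
      split; first by apply: der_lcomb.
        by move=> c; rewrite heW1 heW2 /q /lcomb rmorphD !rmorphM.
      by move=> b; rewrite heB1 heB2 /de rmorphD !rmorphM !htc.
    by move=> x; rewrite /p /lcomb rmorphD !rmorphM -hWD1 -hWD2 !hphi !htc.
  split => //; first by split => //; exists d, de.
  by move=> q' hq'; apply: (lift_unique hfree hwd hq' hl).
have hlie : weil_lift phi alpha iW iB WD (lie p1 p2) (lie q1 q2).
  split; first by apply: der_lie.
  exists (lie d1 d2), (lie de1 de2); split.
  - split; rewrite /lie.
    + exact: der_lie.
    + exact: der_lie.
    + exact: der_lie.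
    + by move=> a; rewrite hc2 hc1 hc1 hc2 scalerBl.
    + by move=> b; rewrite hpp2 hpp1 hpp1 hpp2 rmorphB.
  - by move=> a; rewrite /lie hqa2 hqa1 hqa1 hqa2 rmorphB.
  exists (lie e1 e2); split.
    split; first by apply: der_lie.
      by move=> c; rewrite /lie heW2 heW1 heW1 heW2 rmorphB.
    by move=> b; rewrite /lie heB2 heB1 heB1 heB2 rmorphB.
  by move=> x; rewrite /lie rmorphB -hWD1 -hWD2 -hWD1 -hWD2.
split.
  split => //.
    split; first by apply: der_lie.
    by have [_ [d [de [tw _ _]]]] := hlie; exists d, de.
  by move=> q' hq'; apply: (lift_unique hfree hwd hq' hlie).
move=> hcom w.
have h0 : weil_lift phi alpha iW iB WD (lie p1 p2) (fun _ => 0).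
  split; first exact: der_zero.
  exists (fun _ => 0), (fun _ => 0); split.
  - split.
    + exact: der_zero.
    + exact: der_zero.
    + exact: der_lie.
    + by move=> a; rewrite scale0r.
    + by move=> b; rewrite /lie hcom subrr rmorph0.
  - by move=> a; rewrite rmorph0.
  exists (fun _ => 0); split.
    split; first exact: der_zero.
      by move=> c; rewrite rmorph0.
    by move=> b; rewrite rmorph0.
  by move=> x; rewrite /lie hcom subrr rmorph0.
have := lift_unique hfree hwd h0 hlie w.
by move=> /esym /eqP; rewrite /lie subr_eq0 => /eqP.
Qed.
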